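(* Let $F = \{f_1,\dots,f_N\}$ with $f_i(z) = a_i z + b_i$, $a_i,b_i\in\mathbb{Z}$. Let $z \in \mathbb{Z}$, let $\alpha, \beta$ be reduced regular expressions, and let $\ell$ be a finite (possibly empty) sequence of literals $i$ each with $a_i > 0$. Then: (1) $I(z, \ell \alpha^* \beta) \iff I(z, \ell \beta) \lor I(P_\ell(z), \alpha)$; (2) $I(z, \ell \alpha^* ) \iff I(z, \ell) \lor I(P_\ell(z), \alpha)$; (3) $I(z, \alpha^* \beta) \iff I(z, \alpha) \lor I(z, \beta)$; (4) $I(z, \alpha^* ) \iff I(z,\alpha)$.
   Context: Regular expressions are over the alphabet $\{1,\dots,N\}$ (literals), built with concatenation (written multiplicatively), union, Kleene star, $\epsilon$ (empty string) and $\emptyset$ (empty language); $L(E)$ is the language of $E$. For a word $s = e_1 e_2 \cdots e_K$ put $P_s = f_{e_K} \circ \dots \circ f_{e_1}$ (with $P_\epsilon$ the identity). A regular expression is reduced if it contains no $\emptyset$ symbol, no union operation, and every literal $i$ occurring in it satisfies $a_i > 0$. For $z \in \mathbb{Z}$ and a reduced expression $E$, $I(z,E)$ is the statement: there exists $s \in L(E)$ with $P_s(z) > z$. *)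

(* Defs.v *)
From Stdlib Require Import ZArith List.
Import ListNotations.
Open Scope Z_scope.

(* Regular expressions over literals (natural numbers; the alphabet {1..N}
   is imposed separately by [over_alphabet]). *)
Inductive regex : Type :=
| RLit : nat -> regex
| REps : regex
| REmpty : regex
| RCat : regex -> regex -> regex
| RUnion : regex -> regex -> regex
| RStar : regex -> regex.

Inductive in_lang : regex -> list nat -> Prop :=
| in_lit : forall i, in_lang (RLit i) [i]
| in_eps : in_lang REps []
| in_cat : forall E1 E2 s1 s2, in_lang E1 s1 -> in_lang E2 s2 ->
    in_lang (RCat E1 E2) (s1 ++ s2)
| in_union_l : forall E1 E2 s, in_lang E1 s -> in_lang (RUnion E1 E2) s
| in_union_r : forall E1 E2 s, in_lang E2 s -> in_lang (RUnion E1 E2) s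
| in_star_nil : forall E, in_lang (RStar E) []
| in_star_cons : forall E s1 s2, in_lang E s1 -> in_lang (RStar E) s2 ->
    in_lang (RStar E) (s1 ++ s2).

Fixpoint over_alphabet (N : nat) (E : regex) : Prop :=
  match E with
  | RLit i => (1 <= i <= N)%nat
  | REps | REmpty => True
  | RCat E1 E2 | RUnion E1 E2 => over_alphabet N E1 /\ over_alphabet N E2
  | RStar E1 => over_alphabet N E1
  end.

(* f_i(z) = a i * z + b i;  P_s = f_{e_K} o ... o f_{e_1}. *)
Definition P (a b : nat -> Z) (s : list nat) (z : Z) : Z :=
  fold_left (fun x i => a i * x + b i) s z.

Fixpoint reduced (a : nat -> Z) (E : regex) : Prop :=
  match E with
  | RLit i => 0 < a i
  | REps => True
  | REmpty => False
  | RCat E1 E2 => reduced a E1 /\ reduced a E2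
  | RUnion _ _ => False
  | RStar E1 => reduced a E1
  end.

Definition I (a b : nat -> Z) (z : Z) (E : regex) : Prop :=
  exists s, in_lang E s /\ P a b s z > z.

Fixpoint word_re (l : list nat) : regex :=
  match l with
  | [] => REps
  | i :: l' => RCat (RLit i) (word_re l')
  end.

(* Main.v *)
Require Import Defs.
From Stdlib Require Import ZArith List Lia.
Import ListNotations.
Open Scope Z_scope.

Lemma Lpos (a : nat -> Z) E s : reduced a E -> in_lang E s -> Forall (fun i => 0 < a i) s.
Proof.
  intros HR H; induction H; simpl in *; try tauto;
    try (apply Forall_app; tauto); repeat constructor; auto.
Qed.

Lemma Papp a b s1 s2 x : P a b (s1 ++ s2) x = P a b s2 (P a b s1 x).
Proof. unfold P; now rewrite fold_left_app. Qed.

Lemma Pgrow a b s : Forall (fun i => 0 < a i) s -> forall x y, x <= y ->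
  P a b s x + (y - x) <= P a b s y.
Proof.
  induction 1 as [|i s Hi Hs IH]; intros x y Hxy; unfold P in *; simpl.
  - lia.
  - specialize (IH (a i * x + b i) (a i * y + b i) ltac:(nia)). nia.
Qed.

Lemma Pmono a b s x y : Forall (fun i => 0 < a i) s -> x <= y -> P a b s x <= P a b s y.
Proof. intros H Hxy; pose proof (Pgrow a b s H x y Hxy); lia. Qed.

Lemma star_lemma a b alpha w : reduced a alpha -> forall s, in_lang (RStar alpha) s ->
  forall x, x <= w -> P a b s x > w -> I a b w alpha.
Proof.
  intros HR s H. remember (RStar alpha) as E. induction H; intros x Hx HP;
    try discriminate.
  - unfold P in HP; simpl in HP; lia.
  - injection HeqE as ->. rewrite Papp in HP.
    destruct (Z_le_gt_dec (P a b s1 x) w).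
    + eapply IHin_lang2; eauto.
    + exists s1; split; auto.
      pose proof (Pmono a b s1 x w (Lpos a _ _ HR H) Hx); lia.
Qed.

Lemma pump a b alpha s w : reduced a alpha -> in_lang alpha s -> P a b s w > w ->
  forall k : nat, exists u, in_lang (RStar alpha) u /\ P a b u w >= w + Z.of_nat k.
Proof.
  intros HR Hs HP k; induction k as [|k [u [Hu Hw]]].
  - exists []; split; [constructor|]. unfold P; simpl; lia.
  - exists (s ++ u); split; [now constructor|].
    rewrite Papp.
    pose proof (Pgrow a b u (Lpos a (RStar alpha) u HR Hu) w (P a b s w) ltac:(lia)).
    lia.
Qed.

Lemma nonempty a E : reduced a E -> exists t, in_lang E t.
Proof.
  induction E; simpl; intros HR; try tauto.
  - eexists; constructor.
  - eexists; constructor.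
  - destruct (IHE1 (proj1 HR)) as [t1 ?]; destruct (IHE2 (proj2 HR)) as [t2 ?].
    eexists; constructor; eauto.
  - eexists; constructor.
Qed.

Lemma word_in l : in_lang (word_re l) l.
Proof.
  induction l; simpl; [constructor|]. change (a :: l) with ([a] ++ l). constructor; auto; constructor.
Qed.

Lemma word_eq l s : in_lang (word_re l) s -> s = l.
Proof.
  revert s; induction l; simpl; intros s H; inversion H; subst; auto.
  match goal with Hh : in_lang (RLit _) _ |- _ => inversion Hh; subst end.
  simpl. f_equal; auto.
Qed.

Theorem mainTheorem6 (N : nat) (a b : nat -> Z) (z : Z)
  (alpha beta : regex) (l : list nat)
  (Ha : over_alphabet N alpha) (Hb : over_alphabet N beta)
  (Hra : reduced a alpha) (Hrb : reduced a beta)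
  (Hl : Forall (fun i => (1 <= i <= N)%nat /\ 0 < a i) l) :
  (I a b z (RCat (word_re l) (RCat (RStar alpha) beta))
     <-> I a b z (RCat (word_re l) beta) \/ I a b (P a b l z) alpha) /\
  (I a b z (RCat (word_re l) (RStar alpha))
     <-> I a b z (word_re l) \/ I a b (P a b l z) alpha) /\
  (I a b z (RCat (RStar alpha) beta) <-> I a b z alpha \/ I a b z beta) /\
  (I a b z (RStar alpha) <-> I a b z alpha).
Proof.
  set (z' := P a b l z).
  split; [|split; [|split]].
  - split.
    + intros [s [Hs HP]]. inversion Hs as [| |E1 E2 s1 s2 Hs1 Hs2| | | |]; subst.
      inversion Hs2 as [| |E3 E4 u t Hu Ht| | | |]; subst.
      apply word_eq in Hs1; subst.
      rewrite !Papp in HP. fold z' in HP.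
      destruct (Z_le_gt_dec (P a b u z') z').
      * left. exists (l ++ t); split; [constructor; auto; apply word_in|].
        rewrite Papp; fold z'.
        pose proof (Pmono a b t _ _ (Lpos a _ _ Hrb Ht) l0). lia.
      * right. eapply star_lemma; eauto. lia.
    + intros [[s [Hs HP]]|[s [Hs HP]]].
      * inversion Hs; subst. exists (s1 ++ ([] ++ s2)); split.
        -- constructor; auto. constructor; auto. constructor.
        -- exact HP.
      * destruct (nonempty a beta Hrb) as [t Ht].
        destruct (pump a b alpha s z' Hra Hs HP (Z.to_nat (z - P a b t z') + 1))
          as [u [Hu Hw]].
        exists (l ++ (u ++ t)); split.
        -- constructor; [apply word_in|]. constructor; auto.
        -- rewrite !Papp; fold z'.
           pose proof (Pgrow a b t (Lpos a _ _ Hrb Ht) z' (P a b u z') ltac:(lia)).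
           lia.
  - split.
    + intros [s [Hs HP]]. inversion Hs as [| |E1 E2 s1 s2 Hs1 Hs2| | | |]; subst.
      apply word_eq in Hs1; subst.
      rewrite !Papp in HP. fold z' in HP.
      destruct (Z_le_gt_dec (P a b s2 z') z').
      * left. exists l; split; [apply word_in|]. fold z'. lia.
      * right. eapply star_lemma; eauto. lia.
    + intros [[s [Hs HP]]|[s [Hs HP]]].
      * apply word_eq in Hs as Heq; subst. exists (l ++ []); split.
        -- constructor; auto. constructor.
        -- rewrite app_nil_r; exact HP.
      * destruct (pump a b alpha s z' Hra Hs HP (Z.to_nat (z - z') + 1))
          as [u [Hu Hw]].
        exists (l ++ u); split.
        -- constructor; [apply word_in|]. auto.
        -- rewrite !Papp; fold z'. lia.
  - split.
    + intros [s [Hs HP]]. inversion Hs as [| |E1 E2 s1 s2 Hs1 Hs2| | | |]; subst.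
      rewrite !Papp in HP.
      destruct (Z_le_gt_dec (P a b s1 z) z).
      * right. exists s2; split; auto.
        pose proof (Pmono a b s2 _ _ (Lpos a _ _ Hrb Hs2) l0). lia.
      * left. eapply star_lemma; eauto. lia.
    + intros [[s [Hs HP]]|[s [Hs HP]]].
      * destruct (nonempty a beta Hrb) as [t Ht].
        destruct (pump a b alpha s z Hra Hs HP (Z.to_nat (z - P a b t z) + 1))
          as [u [Hu Hw]].
        exists (u ++ t); split; [constructor; auto|].
        rewrite !Papp.
        pose proof (Pgrow a b t (Lpos a _ _ Hrb Ht) z (P a b u z) ltac:(lia)).
        lia.
      * exists ([] ++ s); split; [constructor; auto; constructor|exact HP].
  - split.
    + intros [s [Hs HP]]. eapply star_lemma; eauto. lia.
    + intros [s [Hs HP]]. exists (s ++ []); split.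
      * constructor; auto; constructor.
      * rewrite app_nil_r; exact HP.
Qed.
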